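(* $PF<_c FLO$, i.e. $PF\le_c FLO$ and $FLO\not\le_c PF$.
   Context: Conventions: every structure is for a finite relational language and has universe a subset of $\omega$; a class of structures is a collection of structures for one fixed finite relational language closed under isomorphism. $D(\mathcal{A})$ is the atomic diagram of $\mathcal{A}$. A computable transformation from $K$ to $K'$ is a c.e. set $\Phi$ of pairs $(\alpha,\varphi)$, $\alpha$ a finite subset of the atomic diagram of a finite structure in the language of $K$, $\varphi$ an atomic sentence or negation of one in the language of $K'$, such that for every $\mathcal{A}\in K$, $\{\varphi:(\exists\alpha\subseteq D(\mathcal{A}))(\alpha,\varphi)\in\Phi\}=D(\mathcal{B})$ for some $\mathcal{B}\in K'$, written $\Phi(\mathcal{A})=\mathcal{B}$. A computable embedding is a computable transformation with $\mathcal{A}\cong\mathcal{A}'\iff\Phi(\mathcal{A})\cong\Phi(\mathcal{A}')$ for all $\mathcal{A},\mathcal{A}'\in K$. $K\le_c K'$ means a computable embedding of $K$ into $K'$ exists; $K<_c K'$ means $K\le_c K'$ and $K'\not\le_c K$. $PF$ is the class of all finite fields of prime order (with addition, multiplication, $0$, $1$ represented by relations: graphs of the operations and unary predicates). $FLO$ is the class of all finite linear orders (language $\{<\}$). *)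

(* Defs.v *)
From HB Require Import structures.
From mathcomp Require Import all_boot all_order all_algebra.
Set Implicit Arguments. Unset Strict Implicit. Unset Printing Implicit Defensive.
Import GRing.Theory.

(* A model of computation: partial recursive functions nat -> nat      *)
(* (the standard basis zero/succ/left/right/pair/comp/prec/rfind', as  *)
(* e.g. in Mathlib's Nat.Partrec.Code), with big-step semantics.       *)

Definition cpair (a b : nat) : nat := ((a + b) * (a + b).+1)./2 + b.

Inductive code : Type :=
| CZero | CSucc | CLeft | CRight
| CPair of code & code
| CComp of code & code
| CPrec of code & code
| CFind of code.

Inductive ev : code -> nat -> nat -> Prop :=
| evZero n : ev CZero n 0
| evSucc n : ev CSucc n n.+1
| evLeft a b : ev CLeft (cpair a b) a
| evRight a b : ev CRight (cpair a b) b
| evPair f g n a b : ev f n a -> ev g n b -> ev (CPair f g) n (cpair a b)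
| evComp f g n m r : ev g n m -> ev f m r -> ev (CComp f g) n r
| evPrec0 f g a r : ev f a r -> ev (CPrec f g) (cpair a 0) r
| evPrecS f g a k ih r :
    ev (CPrec f g) (cpair a k) ih -> ev g (cpair a (cpair k ih)) r ->
    ev (CPrec f g) (cpair a k.+1) r
| evFind0 f a m : ev f (cpair a m) 0 -> ev (CFind f) (cpair a m) m
| evFindS f a m v r : ev f (cpair a m) v.+1 -> ev (CFind f) (cpair a m.+1) r ->
    ev (CFind f) (cpair a m) r.

Definition ce (T : countType) (P : T -> Prop) : Prop :=
  exists c : code, forall x : T, P x <-> exists r, ev c (pickle x) r.

(* A finite relational language: the list of arities of its symbols
   R_0, ..., R_{k-1}. *)
Definition language := seq nat.

(* A structure: universe (a subset of omega) and interpretation of the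
   relation symbols (only values on tuples of the right arity from the
   universe matter). *)
Record structure (L : language) := Structure {
  sdom : pred nat;
  srel : nat -> seq nat -> bool }.

(* Atomic sentences (with constants naming the elements of omega):
   (0, [:: a; b])   is  a = b
   (i.+1, t)        is  R_i(t)
   A literal is (true, atom) for the atom, (false, atom) for its negation. *)
Definition atom := (nat * seq nat)%type.
Definition lit := (bool * atom)%type.

Definition wf_lit (L : language) (l : lit) : bool :=
  let: (_, (s, t)) := l in
  match s with
  | 0 => size t == 2
  | i.+1 => (i < size L) && (size t == nth 0 L i)
  end.

Definition diagram (L : language) (A : structure L) (l : lit) : bool :=
  let: (b, (s, t)) := l in
  match s with
  | 0 => if t is [:: a; c] then [&& sdom A a, sdom A c & b == (a == c)]
         else false
  | i.+1 => [&& i < size L, size t == nth 0 L i, all (sdom A) t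
             & b == srel A i t]
  end.

Definition finite_str (L : language) (A : structure L) : Prop :=
  exists s : seq nat, forall n, sdom A n = (n \in s).

Definition iso (L : language) (A B : structure L) : Prop :=
  exists f : nat -> nat,
  [/\ forall x, sdom A x -> sdom B (f x),
      forall x y, sdom A x -> sdom A y -> f x = f y -> x = y,
      (forall y, sdom B y -> exists2 x, sdom A x & f x = y) &
      forall i t, i < size L -> size t = nth 0 L i -> all (sdom A) t ->
        srel B i (map f t) = srel A i t].

Definition yields (L L' : language) (Phi : seq lit * lit -> Prop)
  (A : structure L) (B : structure L') : Prop :=
  forall ph : lit,
    (exists al : seq lit, Phi (al, ph) /\ all (diagram A) al) <-> diagram B ph.

Definition comp_transformation (L L' : language)
  (K : structure L -> Prop) (K' : structure L' -> Prop)
  (Phi : seq lit * lit -> Prop) : Prop :=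
  [/\ ce Phi,
      (forall al ph, Phi (al, ph) ->
         (exists C : structure L, finite_str C /\ all (diagram C) al)
         /\ wf_lit L' ph)
    & forall A, K A -> exists B, K' B /\ yields Phi A B].

Definition comp_embedding (L L' : language)
  (K : structure L -> Prop) (K' : structure L' -> Prop)
  (Phi : seq lit * lit -> Prop) : Prop :=
  comp_transformation K K' Phi /\
  forall (A A' : structure L) (B B' : structure L'),
    K A -> K A' -> yields Phi A B -> yields Phi A' B' ->
    (iso A A' <-> iso B B').

Definition le_c (L L' : language)
  (K : structure L -> Prop) (K' : structure L' -> Prop) : Prop :=
  exists Phi, comp_embedding K K' Phi.

Definition lt_c (L L' : language)
  (K : structure L -> Prop) (K' : structure L' -> Prop) : Prop :=
  le_c K K' /\ ~ le_c K' K.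

(* Language of fields: R_0 = graph of +, R_1 = graph of *,
   R_2 = {0}, R_3 = {1}. *)
Definition pf_lang : language := [:: 3; 3; 1; 1].

Definition PF (A : structure pf_lang) : Prop :=
  exists (F : finFieldType) (h : F -> nat),
  [/\ prime #|F|, injective h &
      (forall n, sdom A n <-> exists x, h x = n)] /\
  [/\       (forall x y z : F, srel A 0 [:: h x; h y; h z] = (x + y == z)%R),
      (forall x y z : F, srel A 1 [:: h x; h y; h z] = (x * y == z)%R),
      (forall x : F, srel A 2 [:: h x] = (x == 0)%R)
    & (forall x : F, srel A 3 [:: h x] = (x == 1)%R)].

(* Language of orders: R_0 = < *)
Definition flo_lang : language := [:: 2].

Definition FLO (A : structure flo_lang) : Prop :=
  [/\ finite_str A, (exists n, sdom A n),
      (forall x, sdom A x -> ~~ srel A 0 [:: x; x]),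
      (forall x y z, sdom A x -> sdom A y -> sdom A z ->
         srel A 0 [:: x; y] -> srel A 0 [:: y; z] -> srel A 0 [:: x; z])
    & (forall x y, sdom A x -> sdom A y -> x != y ->
         srel A 0 [:: x; y] || srel A 0 [:: y; x])].

(* Main.v *)
Require Import Defs.
From mathcomp Require Import all_boot all_order all_algebra all_field.
Set Implicit Arguments. Unset Strict Implicit.

Definition tri s := (s * s.+1)./2.
Lemma triS s : tri s.+1 = tri s + s.+1.
Proof.
rewrite /tri. have -> : s.+1 * s.+2 = s * s.+1 + (s.+1).*2.
  by rewrite -mul2n -mulnDl addn2 mulnC.
by rewrite halfD doubleK odd_double andbF add0n.
Qed.

Lemma cpairE a b : cpair a b = tri (a + b) + b.
Proof. by []. Qed.

Lemma cpair_succ a b : (cpair a b).+1 = if a is a'.+1 then cpair a' b.+1 else cpair b.+1 0.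
Proof.
case: a => [|a]; rewrite !cpairE.
  by rewrite add0n !addn0 triS addnS.
by rewrite addSnnS -addnS.
Qed.

Fixpoint unpair n := match n with
 | 0 => (0, 0)
 | n'.+1 => let: (a, b) := unpair n' in if a is a'.+1 then (a', b.+1) else (b.+1, 0)
 end.

Lemma unpairK n : cpair (unpair n).1 (unpair n).2 = n.
Proof.
elim: n => [|n IH] //=.
case: (unpair n) IH => a b /= <-.
by case: a => [|a]; rewrite cpair_succ.
Qed.

Lemma tri_mono s s' : s <= s' -> tri s <= tri s'.
Proof.
move=> /subnK <-; elim: (s' - s) => [|k IH] //.
by rewrite addSn triS (leq_trans IH) // leq_addr.
Qed.

Lemma cpair_lt a b : cpair a b < tri (a + b).+1.
Proof. by rewrite cpairE triS ltn_add2l ltnS leq_addl. Qed.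

Lemma cpair_ge a b : tri (a + b) <= cpair a b.
Proof. by rewrite cpairE leq_addr. Qed.

Lemma cpair_inj a b c d : cpair a b = cpair c d -> a = c /\ b = d.
Proof.
move=> E.
have Es : a + b = c + d.
  case: (ltngtP (a + b) (c + d)) => // H.
  - have := cpair_lt a b; rewrite E => H2.
    have := leq_trans (tri_mono H) (cpair_ge c d).
    by rewrite leqNgt H2.
  - have := cpair_lt c d; rewrite -E => H2.
    have := leq_trans (tri_mono H) (cpair_ge a b).
    by rewrite leqNgt H2.
move: E; rewrite !cpairE Es => /addnI Ebd; subst d.
by split => //; move/addIn: Es.
Qed.

Lemma cpairK a b : unpair (cpair a b) = (a, b).
Proof.
have := unpairK (cpair a b); case: (unpair (cpair a b)) => x y /= /cpair_inj [-> ->] //.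
Qed.

Ltac cp := repeat match goal with H : cpair _ _ = cpair _ _ |- _ =>
   apply cpair_inj in H; destruct H; subst end.

Lemma ev_det c n r1 r2 : ev c n r1 -> ev c n r2 -> r1 = r2.
Proof.
move=> H; elim: H r2.
- by move=> n0 r2 H; inversion H.
- by move=> n0 r2 H; inversion H.
- by move=> a b r2 H; inversion H; subst; cp.
- by move=> a b r2 H; inversion H; subst; cp.
- move=> f g n0 a b _ IH1 _ IH2 r2 H; inversion H; subst.
  match goal with H1 : ev f _ _, H2 : ev g _ _ |- _ => by rewrite (IH1 _ H1) (IH2 _ H2) end.
- move=> f g n0 m r _ IH1 _ IH2 r2 H; inversion H; subst.
  match goal with H1 : ev g _ _ |- _ => have E := IH1 _ H1 end; subst.
  match goal with H1 : ev f _ _ |- _ => by rewrite (IH2 _ H1) end.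
- move=> f g a r _ IH r2 H; inversion H; subst; cp; first exact: IH.
  by [].
- move=> f g a k ih r _ IH1 _ IH2 r2 H; inversion H; subst; cp; first by [].
  match goal with E : _.+1 = _.+1 |- _ => case: E => E; subst end.
  match goal with H1 : ev (CPrec f g) (cpair a k) _ |- _ => have E := IH1 _ H1 end; subst.
  by apply: IH2.
- move=> f a m _ IH r2 H; inversion H; subst; cp; first by [].
  match goal with H1 : ev f _ _ |- _ => by have := IH _ H1 end.
- move=> f a m v r _ IH1 _ IH2 r2 H; inversion H; subst; cp.
  + match goal with H1 : ev f _ 0 |- _ => by have := IH1 _ H1 end.
  + by apply: IH2.
Qed.

Definition idc := CPair CLeft CRight.
Fixpoint cK k := if k is k'.+1 then CComp CSucc (cK k') else CZero.
Definition RR := CComp CRight CRight.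
Definition cadd := CPrec idc (CComp CSucc RR).
Definition app2 c f g := CComp c (CPair f g).
Definition cmul := CPrec CZero (app2 cadd RR CLeft).
Definition cpred := CPrec CZero (CComp CLeft CRight).
Definition csub := CPrec idc (CComp cpred (CPair CZero RR)).
Definition cpow2 := CPrec (cK 1) (app2 cadd RR RR).

Lemma ev_left n : ev CLeft n (unpair n).1.
Proof. by rewrite -{1}(unpairK n); constructor. Qed.
Lemma ev_right n : ev CRight n (unpair n).2.
Proof. by rewrite -{1}(unpairK n); constructor. Qed.
Lemma ev_idc n : ev idc n n.
Proof. by rewrite -{2}(unpairK n); constructor; [apply: ev_left|apply: ev_right]. Qed.
Lemma ev_RR a k ih : ev RR (cpair a (cpair k ih)) ih.
Proof. by apply: evComp; constructor. Qed.
Lemma ev_cK k n : ev (cK k) n k.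
Proof. by elim: k => [|k IH] /=; [constructor| apply: evComp IH _; constructor]. Qed.
Lemma ev_app2 c f g n x y r : ev f n x -> ev g n y -> ev c (cpair x y) r -> ev (app2 c f g) n r.
Proof. by move=> Hf Hg Hc; apply: evComp Hc; constructor. Qed.

Lemma ev_add a k : ev cadd (cpair a k) (a + k).
Proof.
elim: k => [|k IH]; first by rewrite addn0; constructor; apply: ev_idc.
apply: evPrecS IH _; rewrite addnS; apply: evComp (ev_RR _ _ _) _; constructor.
Qed.

Lemma ev_mul a k : ev cmul (cpair a k) (a * k).
Proof.
elim: k => [|k IH]; first by rewrite muln0; constructor; constructor.
apply: evPrecS IH _; rewrite mulnS addnC.
apply: ev_app2 (ev_RR _ _ _) _ (ev_add _ _); constructor.
Qed.

Lemma ev_pred a k : ev cpred (cpair a k) k.-1.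
Proof.
elim: k => [|k IH]; first by constructor; constructor.
apply: evPrecS IH _; apply: evComp; constructor.
Qed.

Lemma ev_sub a k : ev csub (cpair a k) (a - k).
Proof.
elim: k => [|k IH]; first by rewrite subn0; constructor; apply: ev_idc.
apply: evPrecS IH _; rewrite subnS.
apply: evComp (ev_pred 0 _); constructor; [constructor|apply: ev_RR].
Qed.

Lemma ev_pow2 a k : ev cpow2 (cpair a k) (2 ^ k).
Proof.
elim: k => [|k IH]; first by constructor; apply: ev_cK.
apply: evPrecS IH _; rewrite expnS mul2n -addnn.
apply: ev_app2 (ev_RR _ _ _) (ev_RR _ _ _) (ev_add _ _).
Qed.

Inductive ex := EX | ECst of nat | EAdd of ex & ex | EMul of ex & ex | ESub of ex & ex
  | EPow2 of ex | EFst of ex | ESnd of ex.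

Fixpoint compile e := match e with
 | EX => idc
 | ECst k => cK k
 | EAdd e1 e2 => app2 cadd (compile e1) (compile e2)
 | EMul e1 e2 => app2 cmul (compile e1) (compile e2)
 | ESub e1 e2 => app2 csub (compile e1) (compile e2)
 | EPow2 e1 => app2 cpow2 CZero (compile e1)
 | EFst e1 => CComp CLeft (compile e1)
 | ESnd e1 => CComp CRight (compile e1)
 end.

Fixpoint eval e n := match e with
 | EX => n
 | ECst k => k
 | EAdd e1 e2 => eval e1 n + eval e2 n
 | EMul e1 e2 => eval e1 n * eval e2 n
 | ESub e1 e2 => eval e1 n - eval e2 n
 | EPow2 e1 => 2 ^ eval e1 n
 | EFst e1 => (unpair (eval e1 n)).1
 | ESnd e1 => (unpair (eval e1 n)).2
 end.

Lemma compile_ok e n : ev (compile e) n (eval e n).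
Proof.
elim: e n => [|k|e1 IH1 e2 IH2|e1 IH1 e2 IH2|e1 IH1 e2 IH2|e1 IH1|e1 IH1|e1 IH1] n /=.
- exact: ev_idc.
- exact: ev_cK.
- exact: ev_app2 (IH1 n) (IH2 n) (ev_add _ _).
- exact: ev_app2 (IH1 n) (IH2 n) (ev_mul _ _).
- exact: ev_app2 (IH1 n) (IH2 n) (ev_sub _ _).
- apply: ev_app2 _ (IH1 n) (ev_pow2 _ _); constructor.
- exact: evComp (IH1 n) (ev_left _).
- exact: evComp (IH1 n) (ev_right _).
Qed.

Lemma find_sound f F N r : (forall n, ev f n (F n)) -> ev (CFind f) N r ->
  forall a m, N = cpair a m -> exists m', F (cpair a m') = 0.
Proof.
move=> HF H; move Ec: (CFind f) H => c H; elim: H Ec => //.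
- move=> f0 a0 m0 H0 _ [E] a m /cpair_inj [E1 E2]; subst.
  by eexists; symmetry; apply: ev_det H0 (HF _).
- move=> f0 a0 m0 v r0 _ _ _ IH E a m /cpair_inj [E1 E2]; subst.
  exact: IH E a m.+1 erefl.
Qed.

Lemma find_complete f F a m0 : (forall n, ev f n (F n)) -> F (cpair a m0) = 0 ->
  forall m, m <= m0 -> exists r, ev (CFind f) (cpair a m) r.
Proof.
move=> HF H0 m Hm; move: {2}(m0 - m) (erefl (m0 - m)) => d.
elim: d m Hm => [|d IH] m Hm Ed.
  have -> : m = m0 by apply/eqP; rewrite eqn_leq Hm /= -subn_eq0 Ed.
  by exists m0; apply: evFind0; rewrite -H0; apply: HF.
case EF: (F (cpair a m)) => [|v].
  by exists m; apply: evFind0; rewrite -EF; apply: HF.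
have Hm' : m < m0 by rewrite -subn_gt0 Ed.
have Ed' : m0 - m.+1 = d by rewrite subnS Ed.
have [r Hr] := IH m.+1 Hm' Ed'.
by exists r; apply: (@evFindS f a m v r _ Hr); rewrite -EF; apply: HF.
Qed.

Definition search f := CComp (CFind f) (CPair idc CZero).

Lemma searchP f F n : (forall n, ev f n (F n)) ->
  (exists r, ev (search f) n r) <-> (exists m, F (cpair n m) = 0).
Proof.
move=> HF; split.
- case=> r H; inversion H; subst.
  have Hp : ev (CPair idc CZero) n (cpair n 0) by constructor; [apply: ev_idc|constructor].
  match goal with H1 : ev (CPair idc CZero) n ?x |- _ => is_var x; have E := ev_det H1 Hp end; subst.
  match goal with H1 : ev (CFind f) _ _ |- _ => exact: find_sound HF H1 n 0 erefl end.
- case=> m Hm; have [r Hr] := find_complete HF Hm (leq0n m).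
  exists r; apply: evComp Hr; constructor; [apply: ev_idc|constructor].
Qed.

Definition litE a : lit := (true, (0, [:: a; a])).
Definition lit0 a b : lit := (a == b, (0, [:: a; b])).
Definition lit1 a b : lit := (a < b, (1, [:: a; b])).
Definition X0 a b : seq lit * lit := ([:: litE a; litE b], lit0 a b).
Definition X1 a b : seq lit * lit := ([:: litE a; litE b], lit1 a b).
Definition PhiP (x : seq lit * lit) : Prop := exists a b, x = X0 a b \/ x = X1 a b.

Definition code2 e1 e2 := EMul (EPow2 e1) (EAdd (EAdd (EPow2 e2) (EPow2 e2)) (ECst 1)).
Definition eA := EFst (ESnd EX).
Definition eB := ESnd (ESnd EX).
Definition eN := EFst EX.
Definition EqB := ESub (ECst 1) (EAdd (ESub eA eB) (ESub eB eA)).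
Definition LtB := ESub (ECst 1) (ESub (ECst 1) (ESub eB eA)).
Definition EncE e := code2 (ECst 1) (code2 (ECst 0) (code2 e e)).
Definition AL := code2 (EncE eA) (EncE eB).
Definition Enc0 := code2 AL (code2 EqB (code2 (ECst 0) (code2 eA eB))).
Definition Enc1 := code2 AL (code2 LtB (code2 (ECst 1) (code2 eA eB))).
Definition Dist x y := EAdd (ESub x y) (ESub y x).
Definition Ff := EMul (Dist eN Enc0) (Dist eN Enc1).

Lemma pk_pair (T1 T2 : countType) (x : T1) (y : T2) : pickle (x, y) = CodeSeq.code [:: pickle x; pickle y].
Proof. reflexivity. Qed.
Lemma pk_bool (b : bool) : pickle b = nat_of_bool b.
Proof. reflexivity. Qed.
Lemma pk_seq (T : countType) (s : seq T) : pickle s = CodeSeq.code (map pickle s).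
Proof. reflexivity. Qed.
Lemma pk_nat (n : nat) : pickle n = n.
Proof. reflexivity. Qed.
Lemma code2E x y : CodeSeq.code [:: x; y] = 2 ^ x * (2 ^ y + 2 ^ y + 1).
Proof. by rewrite /CodeSeq.code /= muln1 addnn addn1. Qed.

Lemma eval_code2 e1 e2 n : eval (code2 e1 e2) n = CodeSeq.code [:: eval e1 n; eval e2 n].
Proof. by rewrite code2E. Qed.

Lemma eqbit a b : nat_of_bool (a == b) = 1 - (a - b + (b - a)).
Proof.
case: (ltngtP a b) => H.
- have -> : a - b = 0 by apply/eqP; rewrite subn_eq0 ltnW.
  by rewrite add0n; case: (b - a) (subn_gt0 a b) => [|k]; rewrite H.
- have -> : b - a = 0 by apply/eqP; rewrite subn_eq0 ltnW.
  by rewrite addn0; case: (a - b) (subn_gt0 b a) => [|k]; rewrite H.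
- by subst; rewrite subnn.
Qed.

Lemma ltbit a b : nat_of_bool (a < b) = 1 - (1 - (b - a)).
Proof. by rewrite -subn_gt0; case: (b - a). Qed.

Lemma dist0 x y : (x - y + (y - x) == 0) = (x == y).
Proof. by rewrite addn_eq0 !subn_eq0 eqn_leq. Qed.

Lemma eval_Enc0 n a b : eval Enc0 (cpair n (cpair a b)) = pickle (X0 a b).
Proof.
rewrite /Enc0 /AL /EncE !eval_code2 /= !cpairK /= -eqbit.
rewrite /X0 /lit0 /litE !pk_pair !pk_seq /= !pk_pair !pk_bool !pk_seq /= !pk_nat.
by [].
Qed.

Lemma eval_Enc1 n a b : eval Enc1 (cpair n (cpair a b)) = pickle (X1 a b).
Proof.
rewrite /Enc1 /AL /EncE !eval_code2 /= !cpairK /= -ltbit.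
rewrite /X1 /lit1 /litE !pk_pair !pk_seq /= !pk_pair !pk_bool !pk_seq /= !pk_nat.
by [].
Qed.

Lemma eval_Ff n a b : eval Ff (cpair n (cpair a b)) =
  (n - pickle (X0 a b) + (pickle (X0 a b) - n)) * (n - pickle (X1 a b) + (pickle (X1 a b) - n)).
Proof.
have E : forall k, eval Ff k = (eval eN k - eval Enc0 k + (eval Enc0 k - eval eN k)) *
    (eval eN k - eval Enc1 k + (eval Enc1 k - eval eN k)) by [].
have EN : eval eN (cpair n (cpair a b)) = n by rewrite /eN /eval cpairK.
by rewrite E EN eval_Enc0 eval_Enc1.
Qed.

Lemma ce_PhiP : ce PhiP.
Proof.
exists (search (compile Ff)) => x.
have SP := @searchP (compile Ff) (eval Ff) (pickle x) (compile_ok Ff).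
apply: (iff_trans _ (iff_sym SP)).
split.
- case=> a [b] H; exists (cpair a b).
  apply/eqP; rewrite eval_Ff muln_eq0 !dist0.
  by case: H => ->; rewrite eqxx ?orbT.
- case=> m; rewrite -(unpairK m).
  move: (unpair m).1 (unpair m).2 => a b /eqP.
  rewrite eval_Ff muln_eq0 !dist0.
  by case/orP => /eqP/(pcan_inj pickleK) ->; exists a, b; [left|right].
Qed.

Module PFM.
Import GRing.Theory.
Local Open Scope ring_scope.

Section PF.
Variable F : finFieldType.
Hypothesis pr : prime #|F|.

Lemma pf_char : #|F| \in [pchar F].
Proof. by apply: (@card_finPcharP F #|F| 1) => //; rewrite expn1. Qed.

Lemma pf_natr_eq (i j : nat) : ((i%:R : F) == j%:R) = (i == j %[mod #|F|])%N.
Proof.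
wlog le : i j / (i <= j)%N.
  move=> H; case/orP: (leq_total i j) => /H // E.
  by rewrite eq_sym E eq_sym.
rewrite eq_sym -subr_eq0 -natrB // -(dvdn_pcharf pf_char) eq_sym eqn_mod_dvd //.
Qed.

Lemma pf_surj (y : F) : exists k : nat, y = k%:R.
Proof.
pose g := fun k : 'I_#|F| => (k : nat)%:R : F.
have gi : injective g.
  move=> k k' /eqP; rewrite pf_natr_eq !modn_small //= => /eqP E.
  exact: val_inj.
have := @inj_card_onto _ _ g gi _ y; rewrite card_ord leqnn => /(_ isT) /codomP [k ->].
by exists k.
Qed.
End PF.

Section Psi.
Variables F F' : finFieldType.
Hypothesis pr : prime #|F|.
Hypothesis EF : #|F| = #|F'|.
Let pr' : prime #|F'|. Proof. by rewrite -EF. Qed.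

Definition psi (x : F) : F' :=
  if [pick k : 'I_#|F| | (k : nat)%:R == x] is Some k then (k : nat)%:R else 0.

Lemma psi_natr (k : nat) : psi k%:R = k%:R.
Proof.
rewrite /psi; case: pickP => [k0 /eqP H | H].
  apply/eqP; rewrite pf_natr_eq // -EF -pf_natr_eq //; exact/eqP.
have := H (Ordinal (ltn_pmod k (prime_gt0 pr))).
by rewrite /= pf_natr_eq // modn_mod eqxx.
Qed.

Lemma psi_inj : injective psi.
Proof.
move=> x y; have [i ->] := pf_surj pr x; have [j ->] := pf_surj pr y.
rewrite !psi_natr => /eqP; rewrite pf_natr_eq // -EF -pf_natr_eq //; by move/eqP.
Qed.

Lemma psiD x y : psi (x + y) = psi x + psi y.
Proof.
have [i ->] := pf_surj pr x; have [j ->] := pf_surj pr y.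
by rewrite -natrD !psi_natr natrD.
Qed.

Lemma psiM x y : psi (x * y) = psi x * psi y.
Proof.
have [i ->] := pf_surj pr x; have [j ->] := pf_surj pr y.
by rewrite -natrM !psi_natr natrM.
Qed.

Lemma psi0 : psi 0 = 0. Proof. by have := psi_natr 0. Qed.
Lemma psi1 : psi 1 = 1. Proof. by have := psi_natr 1. Qed.

Lemma psi_surj y : exists x, psi x = y.
Proof. have [k ->] := pf_surj pr' y; by exists k%:R; rewrite psi_natr. Qed.
End Psi.

End PFM.
Import PFM.

Import GRing.Theory.

Lemma dom_seq (A : structure pf_lang) (F : finFieldType) (h : F -> nat) :
  (forall n, sdom A n <-> exists x, h x = n) -> forall n, sdom A n = (n \in map h (enum F)).
Proof.
move=> H n; have := H n; case: (sdom A n) => [[/(_ isT) [x <-] _]|[_ H2]].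
  by rewrite map_f ?mem_enum.
apply/esym/negbTE/negP => /mapP [x _ E].
by have := H2 (ex_intro _ x (esym E)).
Qed.

Lemma uniq_dom (F : finFieldType) (h : F -> nat) : injective h -> uniq (map h (enum F)).
Proof. by move=> hi; rewrite map_inj_uniq ?enum_uniq. Qed.

Lemma size_dom (F : finFieldType) (h : F -> nat) : size (map h (enum F)) = #|F|.
Proof. by rewrite size_map -cardE. Qed.

Lemma iso_size L (A A' : structure L) s s' : uniq s -> uniq s' ->
  (forall n, sdom A n = (n \in s)) -> (forall n, sdom A' n = (n \in s')) ->
  iso A A' -> size s = size s'.
Proof.
move=> us us' ds ds' [f [H1 H2 H3 _]].
apply/eqP; rewrite eqn_leq; apply/andP; split.
  rewrite -(size_map f); apply: uniq_leq_size.
    rewrite map_inj_in_uniq // => x y xs ys; apply: H2; by rewrite ds.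
  move=> y /mapP [x xs ->]; rewrite -ds'; apply: H1; by rewrite ds.
rewrite -(size_map f s); apply: uniq_leq_size => // y ys.
have yA : sdom A' y by rewrite ds'.
have [x xA <-] := H3 y yA.
by rewrite map_f // -ds.
Qed.

Lemma nth_lt_mono (ss : seq nat) i j : sorted ltn ss -> i < size ss -> j < size ss ->
  (nth 0 ss i < nth 0 ss j) = (i < j).
Proof.
move=> st hi hj; case: (ltnP i j) => H.
  by apply: (sorted_ltn_nth ltn_trans).
rewrite leq_eqVlt in H; case/orP: H => [/eqP -> | H]; first by rewrite ltnn.
apply/negbTE; rewrite -leqNgt ltnW //.
by apply: (sorted_ltn_nth ltn_trans).
Qed.

Lemma sort_ltn (s : seq nat) : uniq s -> sorted ltn (sort leq s).
Proof. by move=> us; rewrite ltn_sorted_uniq_leq sort_uniq us sort_sorted //; exact: leq_total. Qed.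

Lemma lin_iso (B B' : structure flo_lang) s s' : uniq s -> uniq s' ->
  (forall n, sdom B n = (n \in s)) -> (forall n, sdom B' n = (n \in s')) ->
  (forall x y, x \in s -> y \in s -> srel B 0 [:: x; y] = (x < y)) ->
  (forall x y, x \in s' -> y \in s' -> srel B' 0 [:: x; y] = (x < y)) ->
  size s = size s' -> iso B B'.
Proof.
move=> us us' ds ds' rs rs' Es.
set ss := sort leq s; set ss' := sort leq s'.
have st := sort_ltn us; have st' := sort_ltn us'.
have uss : uniq ss by rewrite sort_uniq.
have uss' : uniq ss' by rewrite sort_uniq.
have Ess : size ss = size ss' by rewrite !size_sort.
have mss : forall x, (x \in ss) = (x \in s) by move=> x; rewrite mem_sort.
have mss' : forall x, (x \in ss') = (x \in s') by move=> x; rewrite mem_sort.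
have ix : forall x, x \in s -> index x ss < size ss by move=> x xs; rewrite index_mem mss.
pose f x := nth 0 ss' (index x ss).
exists f; split.
- move=> x; rewrite ds ds' => xs; rewrite -mss' mem_nth // -Ess; exact: ix.
- move=> x y; rewrite !ds => xs ys /eqP; rewrite /f nth_uniq -?Ess ?ix // => /eqP E.
  by rewrite -(nth_index 0 (_ : x \in ss)) ?mss // E nth_index // mss.
- move=> y; rewrite ds' => ys; exists (nth 0 ss (index y ss')).
    by rewrite ds -mss mem_nth // Ess index_mem mss'.
  by rewrite /f index_uniq ?nth_index ?mss' // Ess index_mem mss'.
- move=> i t; case: i => // _; case: t => [|x [|y []]] //= _.
  rewrite !ds andbT => /andP [xs ys].
  rewrite rs // rs'; last by rewrite -mss' mem_nth // -Ess ix.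
    rewrite /f (nth_lt_mono st') -?Ess ?ix //.
    by rewrite -(nth_lt_mono st) ?ix // !nth_index ?mss.
  by rewrite -mss' mem_nth // -Ess ix.
Qed.

Definition Bof (A : structure pf_lang) : structure flo_lang :=
  @Structure flo_lang (sdom A) (fun i t => if t is [:: x; y] then x < y else false).

Lemma yields_diag L L' (Phi : seq lit * lit -> Prop) (A : structure L) (B B' : structure L') :
  yields Phi A B -> yields Phi A B' -> forall l, diagram B l = diagram B' l.
Proof.
move=> H H' l; apply/idP/idP => [/H/H'|/H'/H] //.
Qed.

Lemma diag_dom L (B : structure L) n : diagram B (true, (0, [:: n; n])) = sdom B n.
Proof. by rewrite /= eqxx andbT andbb. Qed.

Lemma yields_B (A : structure pf_lang) : yields PhiP A (Bof A).
Proof.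
move=> [bb [s t]]; split.
- case=> al [[a [b [E|E]]] Hal]; case: E => E1 E2 E3 E4; subst; move: Hal => /=;
  case/and3P => /and3P [Ha _ _] /and3P [Hb _ _] _; by rewrite Ha Hb !eqxx.
- case: s => [|i].
    case: t => [|x [|y []]] //= /and3P [Hx Hy /eqP ->].
    exists [:: litE x; litE y]; split; first by exists x, y; left.
    by rewrite /= Hx Hy !eqxx.
  case: i => // /=; case: t => [|x [|y []]] //= /andP [/and3P [Hx Hy _] /eqP ->].
  exists [:: litE x; litE y]; split; first by exists x, y; right.
  by rewrite /= Hx Hy !eqxx.
Qed.

Lemma FLO_B A : PF A -> FLO (Bof A).
Proof.
case=> F [h [[pr hi hd] _]].
split.
- exists (map h (enum F)) => n; exact: dom_seq hd n.
- by exists (h 0%R); apply/(hd _).2; exists 0%R.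
- by move=> x _; rewrite /= ltnn.
- move=> x y z _ _ _ /=; exact: ltn_trans.
- by move=> x y _ _ /=; case: ltngtP.
Qed.

Lemma Phi_wf al ph : PhiP (al, ph) ->
  (exists C : structure pf_lang, finite_str C /\ all (diagram C) al) /\ wf_lit flo_lang ph.
Proof.
case=> a [b [E|E]]; case: E => E1 E2; subst; split => //;
  exists (@Structure pf_lang (fun n => n \in [:: a; b]) (fun _ _ => false));
  (split; first by exists [:: a; b]);
  by rewrite /= !inE !eqxx ?orbT.
Qed.

Lemma seq_dom (A : structure pf_lang) (F : finFieldType) (h : F -> nat) :
  (forall n, sdom A n <-> exists x, h x = n) -> forall t, all (sdom A) t -> exists xs, t = map h xs.
Proof.
move=> hd; elim=> [|a t IH] /=; first by exists [::].
by case/andP => /hd [x <-] /IH [xs ->]; exists (x :: xs).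
Qed.


Lemma PF_iso_card (A A' : structure pf_lang) (F F' : finFieldType) (h : F -> nat) (h' : F' -> nat) :
  [/\ prime #|F|, injective h & (forall n, sdom A n <-> exists x, h x = n)] /\
  [/\ (forall x y z : F, srel A 0 [:: h x; h y; h z] = (x + y == z)%R),
      (forall x y z : F, srel A 1 [:: h x; h y; h z] = (x * y == z)%R),
      (forall x : F, srel A 2 [:: h x] = (x == 0)%R)
    & (forall x : F, srel A 3 [:: h x] = (x == 1)%R)] ->
  [/\ prime #|F'|, injective h' & (forall n, sdom A' n <-> exists x, h' x = n)] /\
  [/\ (forall x y z : F', srel A' 0 [:: h' x; h' y; h' z] = (x + y == z)%R),
      (forall x y z : F', srel A' 1 [:: h' x; h' y; h' z] = (x * y == z)%R),
      (forall x : F', srel A' 2 [:: h' x] = (x == 0)%R)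
    & (forall x : F', srel A' 3 [:: h' x] = (x == 1)%R)] ->
  #|F| = #|F'| -> iso A A'.
Proof.
move=> [[pr hi hd] [R0 R1 R2 R3]] [[pr' hi' hd'] [R0' R1' R2' R3']] EF.
pose ps := @psi F F'.
have psi_i : injective ps := psi_inj pr EF.
pose f n := if [pick x : F | h x == n] is Some x then h' (ps x) else 0.
have fh : forall x, f (h x) = h' (ps x).
  move=> x; rewrite /f; case: pickP => [y /eqP /hi -> // | H].
  by have := H x; rewrite eqxx.
exists f; split.
- by move=> n /hd [x <-]; rewrite fh; apply/(hd' _).2; exists (ps x).
- move=> n m /hd [x <-] /hd [y <-]; rewrite !fh => /hi' /psi_i -> //.
- move=> n /hd' [y <-]; have [x <-] := psi_surj pr EF y.
  by exists (h x); [apply/(hd _).2; exists x | rewrite fh].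
- move=> i t Hi Hs /(seq_dom hd) [xs Et]; subst t.
  have -> : map f (map h xs) = map h' (map ps xs).
    by rewrite -!map_comp; apply: eq_map => x /=; rewrite fh.
  move: Hs; rewrite size_map.
  case: i Hi => [|[|[|[|i]]]] // _;
  case: xs => [|x [|y [|z []]]] //= _.
  + by rewrite R0 R0' -psiD ?(inj_eq psi_i).
  + by rewrite R1 R1' -psiM ?(inj_eq psi_i).
  + by rewrite R2 R2' -(psi0 pr EF) (inj_eq psi_i).
  + by rewrite R3 R3' -(psi1 pr EF) (inj_eq psi_i).
Qed.

Lemma yields_props (A : structure pf_lang) (B : structure flo_lang) (s : seq nat) :
  yields PhiP A B -> (forall n, sdom A n = (n \in s)) ->
  (forall n, sdom B n = (n \in s)) /\
  (forall x y, x \in s -> y \in s -> srel B 0 [:: x; y] = (x < y)).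
Proof.
move=> Y ds.
have D := yields_diag Y (yields_B A).
have dB : forall n, sdom B n = (n \in s).
  by move=> n; rewrite -diag_dom D diag_dom /= ds.
split => // x y xs ys.
have := D (srel B 0 [:: x; y], (1, [:: x; y])).
rewrite /= !dB xs ys /= eqxx !ds xs ys /= => /esym /eqP //.
Qed.

Lemma le_PF_FLO : le_c PF FLO.
Proof.
exists PhiP; split.
  split; first exact: ce_PhiP.
    by move=> al ph; apply: Phi_wf.
  move=> A HA; exists (Bof A); split; [exact: FLO_B | exact: yields_B].
move=> A A' B B' HA HA' YB YB'.
case: (HA) => F [h [[pr hi hd] HR]].
case: (HA') => F' [h' [[pr' hi' hd'] HR']].
have dsA := dom_seq hd; have dsA' := dom_seq hd'.
have [dB rB] := yields_props YB dsA.
have [dB' rB'] := yields_props YB' dsA'.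
have u := uniq_dom hi; have u' := uniq_dom hi'.
split.
- move=> I; have Es := iso_size u u' dsA dsA' I.
  exact: lin_iso u u' dB dB' rB rB' Es.
- move=> I; have Es := iso_size u u' dB dB' I.
  apply: (@PF_iso_card A A' F F' h h'); try by split.
  by rewrite -(size_dom h) Es size_dom.
Qed.

Import GRing.Theory.

Definition Ak k : structure flo_lang :=
  @Structure flo_lang (fun n => n < k) (fun i t => if t is [:: x; y] then x < y else false).

Lemma Ak_dom k n : sdom (Ak k) n = (n \in iota 0 k).
Proof. by rewrite mem_iota. Qed.

Lemma FLO_Ak k : 0 < k -> FLO (Ak k).
Proof.
move=> k0; split.
- by exists (iota 0 k) => n; rewrite Ak_dom.
- by exists 0.
- by move=> x _; rewrite /= ltnn.
- move=> x y z _ _ _ /=; exact: ltn_trans.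
- by move=> x y _ _ /=; case: ltngtP.
Qed.

Lemma not_iso12 : ~ iso (Ak 1) (Ak 2).
Proof.
move=> I; have := iso_size (iota_uniq 0 1) (iota_uniq 0 2) (@Ak_dom 1) (@Ak_dom 2) I.
by [].
Qed.

Lemma diag12 l : diagram (Ak 1) l -> diagram (Ak 2) l.
Proof.
case: l => b [[|i] t] /=.
  case: t => [|a [|c []]] //= /and3P [Ha Hc ->].
  by rewrite !(leq_trans _ (isT : 1 <= 2)).
case/and4P => -> -> Ht ->; rewrite andbT /=.
apply: sub_all Ht => x /= Hx; exact: leq_trans Hx _.
Qed.

Lemma rel_transfer (B1 B2 : structure pf_lang) :
  (forall l, diagram B1 l -> diagram B2 l) ->
  forall i t, i < size pf_lang -> size t = nth 0 pf_lang i -> all (sdom B1) t ->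
  srel B2 i t = srel B1 i t.
Proof.
move=> D i t Hi Hs Ht.
have := D (srel B1 i t, (i.+1, t)).
rewrite /= Hi Hs eqxx Ht eqxx => /(_ isT) /and4P [_ _ _ /eqP] //.
Qed.

Lemma sub_iso (B1 B2 : structure pf_lang) : PF B1 -> PF B2 ->
  (forall l, diagram B1 l -> diagram B2 l) -> iso B1 B2.
Proof.
move=> [F1 [h1 [[pr1 hi1 hd1] [R0 R1 R2 R3]]]] [F2 [h2 [[pr2 hi2 hd2] [S0 S1 S2 S3]]]] D.
have dom12 : forall n, sdom B1 n -> sdom B2 n.
  by move=> n; rewrite -!diag_dom; apply: D.
have RT := rel_transfer D.
have img : forall x : F1, exists y : F2, h1 x = h2 y.
  move=> x; have : sdom B2 (h1 x) by apply: dom12; apply/(hd1 _).2; exists x.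
  by case/hd2 => y <-; exists y.
have inB1 : forall x : F1, sdom B1 (h1 x) by move=> x; apply/(hd1 _).2; exists x.
have key : forall k : nat, exists x : F1, h1 x = h2 (k%:R)%R.
  elim=> [|k [x Hx]].
    exists 0%R; have [y Hy] := img 0%R.
    have := RT 2 [:: h1 0%R] isT erefl; rewrite /= inB1 => /(_ isT).
    by rewrite R2 Hy S2 eqxx => /eqP ->.
  have [u Hu] := img 1%R; have [w Hw] := img (x + 1)%R.
  have E3 := RT 3 [:: h1 1%R] isT erefl; rewrite /= inB1 in E3.
  have Eu : u = 1%R by apply/eqP; rewrite -S3 -Hu E3 // R3 eqxx.
  have := RT 0 [:: h1 x; h1 1%R; h1 (x + 1)%R] isT erefl; rewrite /= !inB1 => /(_ isT).
  rewrite R0 eqxx Hx Hu Hw S0 Eu => /eqP; rewrite natr1 => Ew.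
  by exists (x + 1)%R; rewrite Hw Ew.
exists id; split => //.
- by move=> y /hd2 [y' <-]; have [k ->] := pf_surj pr2 y'; have [x <-] := key k; exists (h1 x).
- by move=> i t Hi Hs Ht; rewrite map_id; apply: RT.
Qed.

Lemma not_le_FLO_PF : ~ le_c FLO PF.
Proof.
case=> Phi [[_ _ HT] HE].
have [B1 [P1 Y1]] := HT _ (FLO_Ak (isT : 0 < 1)).
have [B2 [P2 Y2]] := HT _ (FLO_Ak (isT : 0 < 2)).
apply: not_iso12; apply/(HE _ _ _ _ (FLO_Ak (isT : 0 < 1)) (FLO_Ak (isT : 0 < 2)) Y1 Y2).
apply: sub_iso P1 P2 _ => l /Y1 [al [Hal Hd]].
apply/Y2; exists al; split => //; apply/allP => l0 /(allP Hd); exact: diag12.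
Qed.

Theorem proposition2p1 : lt_c PF FLO.
Proof. split; [exact: le_PF_FLO | exact: not_le_FLO_PF]. Qed.
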